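(* Consider a Kepler billiard in the plane: a particle moves under a Kepler(-Coulomb) potential centered at $F$ and is elastically reflected at a wall $\mathbf{K}$ which is either an ellipse or a branch of a hyperbola with foci $F$ and $F'$. Choose coordinates with $F'=(0,0)$ and $F=(-2c_{\mathbf{K}},0)$, and let $a_{\mathbf{K}}$ be the semi-major axis of $\mathbf{K}$. Fix a non-zero energy, so that the Keplerian arcs are arcs of conics with focus $F$ and common semi-major axis $a$, and let $F_1,F_2,\dots$ be the second foci of the successive Keplerian arcs along a billiard trajectory; these lie on a circle centered at $F'$ of radius $R$. Then there are real numbers $x_0=x_0(a,R)$ and $r_0=r_0(a,R)$, depending only on $\mathbf{K}$ and given by quadratic functions of $a$ and $R$, such that every line $\ell(F_iF_{i+1})$ through consecutive second foci is tangent to the circle with center $(x_0,0)$ and radius $|r_0|$ (the foci-caustic circle).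
   Context: Elastic reflection means the velocity is reflected with respect to the tangent line to $\mathbf{K}$ at the impact point, preserving energy; the semi-major axis $a$ of the Keplerian orbit is preserved under reflections. The second focus of an elliptic Keplerian orbit $\{P:|PF|+|PF_i|=2a\}$ is $F_i$; for hyperbolic orbits it is the other focus of the hyperbola containing the arc. It is a known fact that the second foci along a trajectory all lie on a circle centered at $F'$; its radius $R$ is a conserved quantity. *)

(* Defs.v *)
From HB Require Import structures.
From mathcomp Require Import all_boot all_order all_algebra.
From mathcomp Require Import reals.
Set Implicit Arguments. Unset Strict Implicit. Unset Printing Implicit Defensive.
Import Order.TTheory GRing.Theory Num.Theory.
Local Open Scope ring_scope.

Section KeplerBilliard.
Variable R : realType.

Definition pt := (R * R)%type.
Definition padd (p q : pt) : pt := (p.1 + q.1, p.2 + q.2).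
Definition psub (p q : pt) : pt := (p.1 - q.1, p.2 - q.2).
Definition pscale (k : R) (p : pt) : pt := (k * p.1, k * p.2).
Definition dot (p q : pt) : R := p.1 * q.1 + p.2 * q.2.
Definition cross (p q : pt) : R := p.1 * q.2 - p.2 * q.1.
Definition pnorm (p : pt) : R := Num.sqrt (dot p p).
Definition dist (p q : pt) : R := pnorm (psub p q).
Definition unitv (p : pt) : pt := pscale (pnorm p)^-1 p.

Definition Fp : pt := (0, 0).
Definition FK (c : R) : pt := (- (2 * c), 0).

(* The wall K: an ellipse, or one branch of a hyperbola, with foci F, F'
   and semi-major axis aK.  [WHyp true] : |XF| - |XF'| = 2 aK,
   [WHyp false] : |XF| - |XF'| = - 2 aK. *)
Inductive wall_kind := WEll | WHyp of bool.

Definition wall_ok (wk : wall_kind) (aK c : R) : Prop :=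
  match wk with
  | WEll => 0 < c /\ c < aK
  | WHyp _ => 0 < aK /\ aK < c
  end.

Definition on_wall (wk : wall_kind) (aK c : R) (X : pt) : Prop :=
  match wk with
  | WEll => dist X (FK c) + dist X Fp = 2 * aK
  | WHyp b => dist X (FK c) - dist X Fp = (if b then 2 * aK else - (2 * aK))
  end.

(* a normal vector of K at X (gradient of the defining function) *)
Definition wall_normal (wk : wall_kind) (c : R) (X : pt) : pt :=
  match wk with
  | WEll => padd (unitv (psub X (FK c))) (unitv (psub X Fp))
  | WHyp _ => psub (unitv (psub X (FK c))) (unitv (psub X Fp))
  end.

(* elastic reflection of v w.r.t. the line orthogonal to n (the tangent line) *)
Definition reflect_tangent (n v : pt) : pt :=
  psub v (pscale (2 * dot v n / dot n n) n).

(* Keplerian arcs at fixed non-zero energy: conics with focus F and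
   semi-major axis a > 0.
   OEll    : negative energy, attractive:  |XF| + |XG| = 2a
   OHypAtt : positive energy, attractive:  |XG| - |XF| = 2a
   OHypRep : positive energy, repulsive:   |XF| - |XG| = 2a
   G is the second focus. *)
Inductive orbit_kind := OEll | OHypAtt | OHypRep.

Definition on_orbit (ok : orbit_kind) (c a : R) (G X : pt) : Prop :=
  match ok with
  | OEll => dist X (FK c) + dist X G = 2 * a
  | OHypAtt => dist X G - dist X (FK c) = 2 * a
  | OHypRep => dist X (FK c) - dist X G = 2 * a
  end.

(* non-degenerate conic (excludes collision/segment orbits) *)
Definition orbit_nondeg (ok : orbit_kind) (c a : R) (G : pt) : Prop :=
  match ok with
  | OEll => dist (FK c) G < 2 * a
  | _ => 2 * a < dist (FK c) G
  end.

Definition orbit_normal (ok : orbit_kind) (c : R) (G X : pt) : pt :=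
  match ok with
  | OEll => padd (unitv (psub X (FK c))) (unitv (psub X G))
  | _ => psub (unitv (psub X (FK c))) (unitv (psub X G))
  end.

(* A Kepler billiard trajectory: impact points P i on K, the i-th Keplerian
   arc goes from P i to P (i+1), lies on the conic with focus F, semi-major
   axis a and second focus G i; v i is its (nonzero, tangent) velocity on
   arrival at P (i+1); after elastic reflection at P (i+1) the velocity is
   tangent to the next arc, of second focus G (i+1). *)
Definition billiard_traj (wk : wall_kind) (aK c : R) (ok : orbit_kind) (a : R)
    (P G v : nat -> pt) : Prop :=
  forall i : nat,
    [/\ on_wall wk aK c (P i),
        orbit_nondeg ok c a (G i),
        on_orbit ok c a (G i) (P i),
        on_orbit ok c a (G i) (P i.+1)
      & [/\ v i <> (0, 0),
            dot (v i) (orbit_normal ok c (G i) (P i.+1)) = 0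
          & dot (reflect_tangent (wall_normal wk c (P i.+1)) (v i))
                (orbit_normal ok c (G i.+1) (P i.+1)) = 0]].

(* the line through distinct points A, B is tangent to the circle of
   center C and radius r (>= 0): distance from C to the line equals r *)
Definition line_tangent_circle (A B C : pt) (r : R) : Prop :=
  A <> B /\ `| cross (psub B A) (psub C A) | = r * pnorm (psub B A).

Definition quadratic2 (f : R -> R -> R) : Prop :=
  exists k0 k1 k2 k3 k4 k5 : R, forall x y : R,
    f x y = k0 + k1 * x + k2 * y + k3 * x ^+ 2 + k4 * x * y + k5 * y ^+ 2.

End KeplerBilliard.

(* Main.v *)
Require Import Defs.
From HB Require Import structures.
From mathcomp Require Import all_boot all_order all_algebra.
From mathcomp Require Import reals.
From mathcomp Require Import ring lra.
Import Order.TTheory GRing.Theory Num.Theory.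
Local Open Scope ring_scope.

Section S.
Variable R : realType.

Lemma fin (p1 p2 a1 a2 b1 b2 x0 r0 rho : R) : 0 < rho -> rho ^+ 2 = p1 ^+ 2 + p2 ^+ 2 ->
  p1 * a1 + p2 * a2 = p1 * b1 + p2 * b2 -> x0 * p1 - (p1 * a1 + p2 * a2) = r0 * rho ->
  (a1,a2) <> (b1,b2) -> line_tangent_circle (a1,a2) (b1,b2) (x0,0) `|r0|.
Proof.
move=> hr hrho hAB hx hne; split => //.
rewrite /cross /psub /pnorm /dot /=.
set u1 := b1 - a1; set u2 := b2 - a2.
set cr := p1 * u2 - p2 * u1.
have h1 : (u1 * (0 - a2) - u2 * (x0 - a1)) * rho^+2 = - cr * (r0 * rho).
  have huP : p1 * u1 + p2 * u2 = 0 by rewrite /u1 /u2; lra.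
  have -> : r0 * rho = p1 * (x0 - a1) - p2 * a2 by rewrite -hx; ring.
  rewrite hrho.
  have -> : (u1 * (0 - a2) - u2 * (x0 - a1)) * (p1 ^+ 2 + p2 ^+ 2) = (p1 * u1 + p2 * u2) * (p1 * (0 - a2) - p2 * (x0 - a1)) - cr * (p1 * (x0 - a1) - p2 * a2) by rewrite /cr; ring.
  by rewrite huP; ring.
have h2 : cr ^+ 2 = (u1 * u1 + u2 * u2) * rho ^+ 2.
  have huP : p1 * u1 + p2 * u2 = 0 by rewrite /u1 /u2; lra.
  rewrite hrho /cr.
  have -> : (u1 * u1 + u2 * u2) * (p1 ^+ 2 + p2 ^+ 2) = (p1 * u1 + p2 * u2)^+2 + (p1 * u2 - p2 * u1)^+2 by ring.
  by rewrite huP; ring.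
have h3 : `|cr| = Num.sqrt (u1 * u1 + u2 * u2) * rho.
  rewrite -sqrtr_sqr h2 sqrtrM; last by nra.
  by rewrite sqrtr_sqr ger0_norm // ltW.
have h4 : `|u1 * (0 - a2) - u2 * (x0 - a1)| * rho ^+ 2 = (`|r0| * Num.sqrt (u1 * u1 + u2 * u2)) * rho ^+ 2.
  have hr2 : 0 <= rho ^+ 2 by apply: exprn_ge0; apply: ltW.
  rewrite -{1}(ger0_norm hr2) -normrM h1 normrM normrN normrM h3 (ger0_norm (ltW hr)).
  by ring.
apply: (mulIf _ h4).
by rewrite expf_neq0 // gt_eqF.
Qed.


Lemma dist_sq (X Y : pt R) : dist X Y ^+ 2 = (X.1 - Y.1) ^+ 2 + (X.2 - Y.2) ^+ 2.
Proof. rewrite /dist /pnorm sqr_sqrtr /dot /=; first ring. by rewrite addr_ge0 // -expr2 sqr_ge0. Qed.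

Lemma dist_ge0 (X Y : pt R) : 0 <= dist X Y.
Proof. exact: sqrtr_ge0. Qed.

Lemma pnorm_sq (X : pt R) : pnorm X ^+ 2 = X.1 ^+ 2 + X.2 ^+ 2.
Proof. rewrite /pnorm sqr_sqrtr /dot /=; first ring. by rewrite addr_ge0 // -expr2 sqr_ge0. Qed.

Definition X0 (c aK s2 t kap a rad : R) :=
  c * (rad ^+ 2 - (s2 * t + kap * a) ^+ 2) / (2 * (aK ^+ 2 - c ^+ 2)).
Definition R0 (c aK s1 s2 t kap a rad : R) :=
  s1 * t / (2 * c) * X0 c aK s2 t kap a rad + s1 * s2 * (s2 * t + kap * a).

Lemma core (c aK s1 s2 t kap a rad : R) (P A B : pt R) :
  c != 0 -> aK ^+ 2 - c ^+ 2 != 0 -> s1 ^+ 2 = 1 -> s2 ^+ 2 = 1 -> t ^+ 2 = 4 * aK ^+ 2 ->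
  dist P (FK c) = s1 * dist P (Fp R) + t ->
  dist P A = s2 * dist P (FK c) + kap * a ->
  dist P B = s2 * dist P (FK c) + kap * a ->
  pnorm A = rad -> pnorm B = rad -> A <> B ->
  line_tangent_circle A B (X0 c aK s2 t kap a rad, 0) `|R0 c aK s1 s2 t kap a rad|.
Proof.
move=> hc hK hs1 hs2 ht hd hA hB nA nB hne.
have hdA := dist_sq P A; have hdB := dist_sq P B; have hdd := dist_sq P (FK c).
have hrho := dist_sq P (Fp R); have hr0 := dist_ge0 P (Fp R).
have hnA := pnorm_sq A; have hnB := pnorm_sq B.
move: hne hdA hdB hdd hrho hr0 hnA hnB hd hA hB nA nB.
set rho := dist P (Fp R); set del := dist P (FK c); set dA := dist P A; set dB := dist P B.
case: P rho del dA dB => p1 p2 rho del dA dB; case: A dA => a1 a2 dA; case: B dB => b1 b2 dB.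
rewrite /= !subr0 !opprK => hne hdA hdB hdd hrho hr0 hnA hnB hd hA hB nA nB.
have hp1 : c * p1 = s1 * t * rho / 2 + (aK ^+ 2 - c ^+ 2).
  have e : del ^+ 2 = s1 ^+ 2 * rho ^+ 2 + 2 * s1 * t * rho + t ^+ 2 by rewrite hd; ring.
  rewrite hs1 ht hrho hdd in e. lra.
have hrpos : 0 < rho.
  rewrite lt_neqAle hr0 andbT; apply/negP => /eqP h0.
  rewrite -h0 in hrho hp1.
  have p10 : p1 = 0 by nra.
  move: hp1; rewrite p10 => hp1. by move/eqP: hK; apply; lra.
set tau := s2 * t + kap * a.
set L := (rad ^+ 2 - tau ^+ 2) / 2 - s1 * s2 * tau * rho.
have hL : forall x1 x2 d, d = s2 * del + kap * a -> d ^+ 2 = (p1 - x1) ^+ 2 + (p2 - x2) ^+ 2 ->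
    pnorm (x1, x2) ^+ 2 = x1 ^+ 2 + x2 ^+ 2 -> pnorm (x1, x2) = rad -> p1 * x1 + p2 * x2 = L.
  move=> x1 x2 d hd' hsq hn hr.
  have e : d ^+ 2 = s1 ^+ 2 * s2 ^+ 2 * rho ^+ 2 + 2 * s1 * s2 * rho * tau + tau ^+ 2
    by rewrite hd' hd /tau; ring.
  rewrite hs1 hs2 hrho hsq in e. rewrite hr in hn. rewrite /L.
  lra.

apply: (@fin p1 p2 a1 a2 b1 b2 _ _ rho hrpos hrho).
- by rewrite (hL _ _ _ hA hdA hnA nA) (hL _ _ _ hB hdB hnB nB).
- rewrite (hL _ _ _ hA hdA hnA nA).
  have -> : p1 = (s1 * t * rho / 2 + (aK ^+ 2 - c ^+ 2)) / c by rewrite -hp1; field.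
  rewrite /L /R0 /X0 -/tau. field. by rewrite hK hc.
- by [].
Qed.

Lemma quadX0 (c aK s2 t kap : R) : quadratic2 (X0 c aK s2 t kap).
Proof.
set D := c / (2 * (aK ^+ 2 - c ^+ 2)).
exists (- D * (s2 * t) ^+ 2), (- 2 * D * s2 * t * kap), 0, (- D * kap ^+ 2), 0, D.
move=> x y; rewrite /X0 /D; ring.
Qed.

Lemma quadR0 (c aK s1 s2 t kap : R) : quadratic2 (R0 c aK s1 s2 t kap).
Proof.
set D := c / (2 * (aK ^+ 2 - c ^+ 2)).
set E := s1 * t / (2 * c).
exists (E * (- D * (s2 * t) ^+ 2) + s1 * s2 * (s2 * t)), (E * (- 2 * D * s2 * t * kap) + s1 * s2 * kap), 0,
  (- E * D * kap ^+ 2), 0, (E * D).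
move=> x y; rewrite /R0 /X0 /D /E; ring.
Qed.
End S.

Theorem mainTheorem2 (R : realType) (wk : wall_kind) (aK c : R) (ok : orbit_kind) :
  wall_ok wk aK c ->
  exists x0 r0 : R -> R -> R,
    [/\ quadratic2 x0, quadratic2 r0 &
      forall (a rad : R) (P G v : nat -> pt R),
        0 < a ->
        billiard_traj wk aK c ok a P G v ->
        (forall i, pnorm (G i) = rad) ->
        forall i, G i <> G i.+1 ->
          line_tangent_circle (G i) (G i.+1) (x0 a rad, 0) `|r0 a rad| ].
Proof.
move=> hw.
have [hc hK] : c != 0 /\ aK ^+ 2 - c ^+ 2 != 0.
  case: wk hw => [|b] [h1 h2].
    split; first by rewrite gt_eqF.
    have : c ^+ 2 < aK ^+ 2 by rewrite ltr_pXn2r //; apply: ltW; lra.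
    by move=> h; rewrite gt_eqF // subr_gt0.
  split; first by rewrite gt_eqF //; lra.
  have : aK ^+ 2 < c ^+ 2 by rewrite ltr_pXn2r //; apply: ltW; lra.
  by move=> h; rewrite lt_eqF // subr_lt0.
pose s1 := match wk with WEll => -1 | WHyp _ => 1 end : R.
pose t := match wk with WEll => 2 * aK | WHyp b => if b then 2 * aK else - (2 * aK) end.
pose s2 := match ok with OEll => -1 | _ => 1 end : R.
pose kap := match ok with OHypRep => -2 | _ => 2 end : R.
exists (@X0 R c aK s2 t kap), (@R0 R c aK s1 s2 t kap).
split; [exact: quadX0 | exact: quadR0 |].
move=> a rad P G v ha htr hG i hne.
have [w1 _ _ o1 _] := htr i.
have [w2 _ o2 _ _] := htr i.+1.
apply: (@core R c aK s1 s2 t kap a rad (P i.+1) (G i) (G i.+1)) => //.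
- by rewrite /s1; case: (wk); rewrite ?expr2 ?mulrNN mul1r.
- by rewrite /s2; case: (ok); rewrite ?expr2 ?mulrNN mul1r.
- rewrite /t; case: (wk) => [|[]]; rewrite ?sqrrN; ring.
- move: w2; rewrite /s1 /t; case: (wk) => [|[]] /=; lra.
- move: o1; rewrite /s2 /kap; case: (ok) => /=; lra.
- move: o2; rewrite /s2 /kap; case: (ok) => /=; lra.
Qed.
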